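(* For any graph $G$ with no isolated vertex, order $n$ and maximum degree $\Delta$, $$\left\lceil\frac{2n}{\Delta}\right\rceil\le\gamma_{(2,2,2)}(G)\le 2\gamma_t(G).$$ Furthermore, if $G$ has minimum degree $\delta\ge2$, then $\gamma_{(2,2,2)}(G)\le\gamma_{\times2,t}(G)$.
   Context: All graphs are finite and simple; $N(v)$ is the open neighbourhood. $\gamma_{(2,2,2)}(G)$ is the minimum of $\sum_v f(v)$ over functions $f:V(G)\to\{0,1,2\}$ with $\sum_{u\in N(v)}f(u)\ge2$ for every vertex $v$. $\gamma_t(G)$ is the total domination number (minimum size of $S$ such that every vertex has a neighbour in $S$). $\gamma_{\times2,t}(G)$ (double total domination number) is the minimum size of $S\subseteq V(G)$ such that every vertex has at least two neighbours in $S$. *)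

(* Defs.v *)
From mathcomp Require Import all_boot.
Set Implicit Arguments. Unset Strict Implicit. Unset Printing Implicit Defensive.

Definition simple_graph (T : finType) (e : rel T) : Prop :=
  symmetric e /\ irreflexive e.

Definition N (T : finType) (e : rel T) (v : T) : {set T} := [set u | e v u].

Definition deg (T : finType) (e : rel T) (v : T) : nat := #|N e v|.
Definition maxdeg (T : finType) (e : rel T) : nat := \max_(v : T) deg e v.
Definition mindeg (T : finType) (e : rel T) : nat := \big[minn/#|T|]_(v : T) deg e v.

Definition no_isolated (T : finType) (e : rel T) : Prop := forall v : T, 0 < deg e v.

Definition is_222 (T : finType) (e : rel T) (f : {ffun T -> 'I_3}) : bool :=
  [forall v, 2 <= \sum_(u in N e v) (f u : nat)].
Definition weight (T : finType) (f : {ffun T -> 'I_3}) : nat := \sum_(v : T) (f v : nat).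
(* minimum weight; the default 2|V| is attained by the constant-2 function
   whenever G has no isolated vertex *)
Definition gamma222 (T : finType) (e : rel T) : nat :=
  \big[minn/#|T|.*2]_(f : {ffun T -> 'I_3} | is_222 e f) weight f.

Definition is_tds (T : finType) (e : rel T) (S : {set T}) : bool :=
  [forall v, [exists u in S, e v u]].
Definition gamma_t (T : finType) (e : rel T) : nat :=
  \big[minn/#|T|]_(S : {set T} | is_tds e S) #|S|.

Definition is_dtds (T : finType) (e : rel T) (S : {set T}) : bool :=
  [forall v, 2 <= #|N e v :&: S|].
Definition gamma_x2t (T : finType) (e : rel T) : nat :=
  \big[minn/#|T|]_(S : {set T} | is_dtds e S) #|S|.

(* Main.v *)
Require Import Defs.
From mathcomp Require Import all_boot.
From mathcomp Require Import zify.

Lemma bigmin_le_seq (I : eqType) (r : seq I) (P : pred I) (F : I -> nat) x0 i :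
  i \in r -> P i -> \big[minn/x0]_(j <- r | P j) F j <= F i.
Proof.
elim: r => // a r IH; rewrite inE big_cons; case/orP => [/eqP->|Hi] Pi.
  by rewrite Pi geq_minl.
case: (P a); last exact: IH.
exact: leq_trans (geq_minr _ _) (IH Hi Pi).
Qed.

Lemma bigmin_le (I : finType) (P : pred I) (F : I -> nat) x0 i :
  P i -> \big[minn/x0]_(j | P j) F j <= F i.
Proof. by move=> Pi; apply: bigmin_le_seq => //; rewrite mem_index_enum. Qed.

Lemma bigmin_le0 (I : finType) (P : pred I) (F : I -> nat) x0 :
  \big[minn/x0]_(j | P j) F j <= x0.
Proof.
elim: (index_enum I) => [|a r IH]; first by rewrite big_nil.
rewrite big_cons; case: (P a) => //; exact: leq_trans (geq_minr _ _) IH.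
Qed.

Lemma bigmin_ind (I : finType) (P : pred I) (F : I -> nat) x0 (Q0 : nat -> Prop) :
  Q0 x0 -> (forall i, P i -> Q0 (F i)) -> Q0 (\big[minn/x0]_(j | P j) F j).
Proof.
move=> H0 H; apply: big_ind => // x y Hx Hy.
by rewrite /minn; case: ifP.
Qed.

Lemma g222w (T : finType) (e : rel T) f : is_222 e f -> gamma222 e <= weight f.
Proof. move=> Hf; rewrite /gamma222; exact: bigmin_le. Qed.

Definition two3 : 'I_3 := @Ordinal 3 2 isT.
Definition one3 : 'I_3 := @Ordinal 3 1 isT.

Theorem theorem15 (T : finType) (e : rel T) :
  simple_graph e -> no_isolated e ->
  ((#|T|.*2 + maxdeg e - 1) %/ maxdeg e <= gamma222 e /\
   gamma222 e <= (gamma_t e).*2) /\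
  (2 <= mindeg e -> gamma222 e <= gamma_x2t e).
Proof.
move=> [esym eirr] noiso.
have g222le : gamma222 e <= #|T|.*2 by apply: bigmin_le0.
split; [split|].
- set D := maxdeg e.
  have [D0|Dpos] := posnP D.
    by rewrite D0 divn0.
  apply: (@bigmin_ind _ _ _ _ (fun x => (#|T|.*2 + D - 1) %/ D <= x)).
    rewrite -ltnS ltn_divLR //; nia.
  move=> f /forallP H222.
  have key : #|T|.*2 <= weight f * D.
    have -> : #|T|.*2 = \sum_(v : T) 2 by rewrite sum_nat_const cardT; lia.
    apply: (@leq_trans (\sum_(v : T) \sum_(u in N e v) (f u : nat))).
      by apply: leq_sum => v _; apply: H222.
    have -> : \sum_(v : T) \sum_(u in N e v) (f u : nat)
        = \sum_(u : T) \sum_(v | e v u) (f u : nat).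
      rewrite (exchange_big_dep predT) //=.
      apply: eq_bigr => u _; apply: eq_bigl => v; by rewrite in_set.
    rewrite /weight big_distrl /=.
    apply: leq_sum => u _.
    have -> : \sum_(v | e v u) (f u : nat) = \sum_(v in N e u) (f u : nat).
      by apply: eq_bigl => v; rewrite in_set esym.
    rewrite sum_nat_const mulnC leq_mul2l; apply/orP; right.
    by rewrite /D /maxdeg; exact: (@leq_bigmax T (deg e) u).
  rewrite -ltnS ltn_divLR //; nia.
- apply: (@bigmin_ind _ _ _ _ (fun x => gamma222 e <= x.*2)) => // S /forallP HS.
  pose f : {ffun T -> 'I_3} := [ffun v => if v \in S then two3 else ord0].
  have Hf : is_222 e f.
    apply/forallP => v; have /existsP [u /andP [uS evu]] := HS v.
    have uN : u \in N e v by rewrite in_set.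
    rewrite (bigD1 u uN) /= ffunE uS /=; exact: leq_addr.
  apply: leq_trans (@g222w _ _ _ Hf) _.
  rewrite /weight.
  rewrite (eq_bigr (fun v => if v \in S then 2 else 0)); last first.
    by move=> v _; rewrite ffunE; case: (v \in S).
  by rewrite -big_mkcond /= sum_nat_const -mul2n mulnC.
- move=> Hmin.
  apply: (@bigmin_ind _ _ _ _ (fun x => gamma222 e <= x)).
    pose f : {ffun T -> 'I_3} := [ffun v : T => one3].
    have Hf : is_222 e f.
      apply/forallP => v.
      rewrite (eq_bigr (fun _ => 1)); last by move=> u _; rewrite ffunE.
      rewrite sum_nat_const muln1.
      apply: leq_trans Hmin _; rewrite /mindeg; exact: bigmin_le.
    apply: leq_trans (@g222w _ _ _ Hf) _.
    rewrite /weight (eq_bigr (fun _ => 1)); last by move=> u _; rewrite ffunE.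
    by rewrite sum_nat_const muln1 cardT.
  move=> S /forallP HS.
  pose f : {ffun T -> 'I_3} := [ffun v => if v \in S then one3 else ord0].
  have Hf : is_222 e f.
    apply/forallP => v; apply: leq_trans (HS v) _.
    rewrite (eq_bigr (fun v => if v \in S then 1 else 0)); last first.
      by move=> u _; rewrite ffunE; case: (u \in S).
    rewrite -big_mkcondr /= -sum1_card.
    by apply: eq_leq; apply: eq_bigl => u; rewrite in_setI.
  apply: leq_trans (@g222w _ _ _ Hf) _.
  rewrite /weight.
  rewrite (eq_bigr (fun v => if v \in S then 1 else 0)); last first.
    by move=> v _; rewrite ffunE; case: (v \in S).
  by rewrite -big_mkcond /= sum_nat_const muln1.
Qed.
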